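(* Let $\mathbf{T}\subset\mathbb{S}^3$ be a spherical tetrahedron with Gram matrix $G=\{g_{ij}\}_{i,j=0}^3$ and edge matrix $G^\star=\{g^\star_{ij}\}_{i,j=0}^3$, and let $c_{ij}$, $c^\star_{ij}$ be the $(i,j)$-cofactors of $G$ and $G^\star$ respectively. Then for all $i,j=0,1,2,3$: $$g_{ij}\,c^\star_{ij}\ge 0\qquad\text{and}\qquad g^\star_{ij}\,c_{ij}\ge 0.$$
   Context: A spherical tetrahedron $\mathbf{T}\subset\mathbb{S}^3\subset\mathbb{R}^4$ is the intersection of $\mathbb{S}^3$ with the cone $\{\sum\lambda_i\mathrm{p}_i:\lambda_i\ge0\}$ over four linearly independent unit vectors $\mathrm{p}_0,\dots,\mathrm{p}_3$. Its edge matrix is $G^\star=(\langle\mathrm{p}_i,\mathrm{p}_j\rangle)_{i,j=0}^3$, and its Gram matrix is $G=(\langle\mathrm{v}_i,\mathrm{v}_j\rangle)_{i,j=0}^3$, where $\mathrm{v}_i$ is the outer unit normal to the face opposite $\mathrm{p}_i$. The $(i,j)$-cofactor of a matrix is $(-1)^{i+j}$ times the determinant of the matrix with row $i$ and column $j$ deleted. *)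

(* Defs.v *)
From HB Require Import structures.
From mathcomp Require Import all_boot all_order all_algebra.
Set Implicit Arguments. Unset Strict Implicit. Unset Printing Implicit Defensive.
Import Order.TTheory GRing.Theory Num.Theory.
Local Open Scope ring_scope.

(* Vectors of R^4 are row vectors 'rV[R]_4; a family of four vectors
   indexed by 'I_4 is stored as the rows of a 4x4 matrix. *)

Definition dotv {R : realFieldType} (u w : 'rV[R]_4) : R := (u *m w^T) 0 0.

Definition gram_of {R : realFieldType} (A : 'M[R]_4) : 'M[R]_4 :=
  \matrix_(i, j) dotv (row i A) (row j A).

Definition tetra_vertices {R : realFieldType} (P : 'M[R]_4) : Prop :=
  row_free P /\ forall i : 'I_4, dotv (row i P) (row i P) = 1.

(* Row i of V is the outer unit normal v_i to the face opposite p_i: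
   a unit vector orthogonal to p_j (j <> i), pointing away from p_i. *)
Definition outer_unit_normals {R : realFieldType} (P V : 'M[R]_4) : Prop :=
  forall i : 'I_4,
    [/\ dotv (row i V) (row i V) = 1,
        dotv (row i V) (row i P) < 0 &
        forall j : 'I_4, j != i -> dotv (row i V) (row j P) = 0].

Definition edge_matrix {R : realFieldType} (P : 'M[R]_4) := gram_of P.
Definition gram_matrix {R : realFieldType} (V : 'M[R]_4) := gram_of V.

(* Main.v *)
Require Import Defs.
From HB Require Import structures.
From mathcomp Require Import all_boot all_order all_algebra.
From mathcomp Require Import ring lra.
Import Order.TTheory GRing.Theory Num.Theory.
Local Open Scope ring_scope.

Lemma dotv_rowE (R : realFieldType) (A B : 'M[R]_4) i j :
  dotv (row i A) (row j B) = (A *m B^T) i j.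
Proof. by rewrite /dotv !mxE; apply: eq_bigr => k _; rewrite !mxE. Qed.

Lemma gram_ofE (R : realFieldType) (A : 'M[R]_4) : gram_of A = A *m A^T.
Proof. by apply/matrixP => i j; rewrite mxE dotv_rowE. Qed.

Lemma inv_uniq (R : realFieldType) (A B : 'M[R]_4) :
  A *m B = 1%:M -> invmx A = B.
Proof.
move=> AB; have [Au _] := mulmx1_unit AB.
by rewrite -[invmx A]mulmx1 -AB mulmxA mulVmx // mul1mx.
Qed.

Lemma cof_inv (R : realFieldType) (A : 'M[R]_4) i j :
  A \in unitmx -> cofactor A i j = \det A * invmx A j i.
Proof.
move=> Au; have := Au; rewrite unitmxE unitfE => dA.
by rewrite /invmx Au !mxE mulrA mulrV ?unitfE // mul1r.
Qed.

Lemma sq_pos (R : realFieldType) (x : R) : x != 0 -> 0 < x * x.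
Proof. by case: (ltgtP x 0) => // h _; nra. Qed.

Theorem proposition3 (R : realFieldType) (P V : 'M[R]_4) :
  tetra_vertices P -> outer_unit_normals P V ->
  forall i j : 'I_4,
    0 <= gram_matrix V i j * cofactor (edge_matrix P) i j /\
    0 <= edge_matrix P i j * cofactor (gram_matrix V) i j.
Proof.
move=> [Pf _] HV i j.
rewrite /gram_matrix /edge_matrix !gram_ofE.
set Gs := P *m P^T; set G := V *m V^T.
pose d : 'rV[R]_4 := \row_k dotv (row k V) (row k P).
pose e : 'rV[R]_4 := \row_k (d 0 k)^-1.
have dneg : forall k, d 0 k < 0 by move=> k; rewrite mxE; case: (HV k).
have eneg : forall k, e 0 k < 0 by move=> k; rewrite mxE invr_lt0.
have H1 : V *m P^T = diag_mx d.
  apply/matrixP => a b; rewrite -dotv_rowE !mxE.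
  case: (eqVneq a b) => [->|ab]; first by rewrite mulr1n.
  by case: (HV a) => _ _ ->; rewrite 1?eq_sym // mulr0n.
have HDE : diag_mx d *m diag_mx e = 1%:M.
  apply/matrixP => a b; rewrite mul_diag_mx !mxE.
  case: (eqVneq a b) => [->|ab]; last by rewrite !mulr0n mulr0.
  by rewrite !mulr1n mulfV // ltr0_neq0 //; case: (HV b).
have Pu : P \in unitmx by rewrite -row_free_unit.
have PTu : P^T \in unitmx by rewrite unitmx_tr.
have Vdef : V = diag_mx d *m invmx P^T by rewrite -H1 mulmxK.
have iGs : invmx Gs = invmx P^T *m invmx P.
  apply: inv_uniq; rewrite /Gs -mulmxA (mulmxA P^T) mulmxV // mul1mx mulmxV //.
have Gu : Gs \in unitmx.
  rewrite unitmxE /Gs det_mulmx det_tr unitfE.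
  by apply: lt0r_neq0; apply: sq_pos; rewrite -unitfE -unitmxE.
have dGs : 0 < \det Gs.
  by rewrite /Gs det_mulmx det_tr; apply: sq_pos; rewrite -unitfE -unitmxE.
have GsT : Gs^T = Gs by rewrite /Gs trmx_mul trmxK.
have Gform : G = diag_mx d *m invmx Gs *m diag_mx d.
  rewrite /G Vdef trmx_mul tr_diag_mx trmx_inv trmxK iGs !mulmxA //.
have iGsS : invmx Gs j i = invmx Gs i j.
  have h := congr1 (fun M : 'M[R]_4 => M j i) (trmx_inv Gs); rewrite GsT /= mxE in h; by rewrite h.
split.
  rewrite cof_inv // iGsS Gform mul_mx_diag mxE mul_diag_mx mxE.
  rewrite (_ : _ * _ = (d 0 i * d 0 j) * \det Gs * (invmx Gs i j * invmx Gs i j)); last by ring.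
  apply: mulr_ge0; last by rewrite -expr2 sqr_ge0.
  by apply: mulr_ge0; [apply: ltW; rewrite nmulr_rgt0 | apply: ltW].
pose Gi := diag_mx e *m Gs *m diag_mx e.
have HGi : G *m Gi = 1%:M.
  rewrite Gform /Gi !mulmxA -(mulmxA _ (diag_mx d)) HDE mulmx1.
  by rewrite -(mulmxA _ P) -/Gs mulmxKV // HDE.
have [GU _] := mulmx1_unit HGi.
have dG : 0 < \det G.
  have := GU; rewrite unitmxE unitfE /G det_mulmx det_tr => h.
  by apply: sq_pos; apply: contraNneq h => ->; rewrite mul0r.
clearbody Gs.
rewrite cof_inv // (@inv_uniq R _ _ HGi) /Gi mul_mx_diag mxE mul_diag_mx mxE.
have GsS : Gs j i = Gs i j by rewrite -{1}GsT mxE.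
rewrite GsS.
rewrite (_ : _ * _ = (e 0 i * e 0 j) * \det G * (Gs i j * Gs i j)); last by ring.
apply: mulr_ge0; last by rewrite -expr2 sqr_ge0.
by apply: mulr_ge0; [apply: ltW; rewrite nmulr_rgt0 | apply: ltW].
Qed.
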